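(* Let $q$ be an indeterminate and let $\mathbf{Sym}(A)$ be the algebra of noncommutative symmetric functions over $\mathbb{C}(q)$ with generators $S_n=S_n(A)$, $S_0=1$. Define $f_0=1$ and, for $n\ge1$, $f_n\in\mathbf{Sym}(A)$ by $$f_n=\sum_{k+l=n} q^k f_k\, S_l((k+1)A),\quad\text{i.e.}\quad (1-q^n)f_n=\sum_{k=0}^{n-1}q^k f_k\,S_{n-k}((k+1)A).$$ Let $L$ be the linear endomorphism of $\mathbf{Sym}(A)$ defined on the basis $S^I$ by $$L(S^I)=S_{i_1}(A)\,S_{i_2}((i_1+1)A)\,S_{i_3}((i_1+i_2+1)A)\cdots S_{i_r}((i_1+\cdots+i_{r-1}+1)A).$$ Then for every $n\ge1$, $$f_n=\sum_{I\vDash n}\frac{q^{\mathrm{maj}(I)}}{(1-q^{i_1})(1-q^{i_1+i_2})\cdots(1-q^{i_1+\cdots+i_r})}\,L(S^I),$$ where the sum runs over compositions $I=(i_1,\dots,i_r)$ of $n$; equivalently $f_n=L\big(S_n(A/(1-q))\big)$.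
   Context: For $m\ge1$, $S_l(mA)$ denotes the coefficient of $t^l$ in $\big(\sum_{k\ge0}S_k t^k\big)^m$. For a composition $I=(i_1,\dots,i_r)$, $S^I=S_{i_1}\cdots S_{i_r}$ and $\mathrm{maj}(I)=(r-1)i_1+(r-2)i_2+\cdots+i_{r-1}$ (the sum of the elements of the descent set $\{i_1,i_1+i_2,\dots,i_1+\cdots+i_{r-1}\}$). The notation $S_n(A/(1-q))$ stands for $\sum_{I\vDash n}\frac{q^{\mathrm{maj}(I)}}{\prod_{k=1}^r(1-q^{i_1+\cdots+i_k})}S^I$. *)

(* Defs.v *)
From HB Require Import structures.
From mathcomp Require Import all_boot all_order all_algebra all_field.
Set Implicit Arguments. Unset Strict Implicit. Unset Printing Implicit Defensive.
Import Order.TTheory GRing.Theory Num.Theory.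
Local Open Scope ring_scope.

(* Ground field C(q): rational functions in one indeterminate over the
   algebraic complex numbers algC, and the indeterminate q. *)
Definition Kq : fieldType := {fraction {poly algC}}.
Definition qq : Kq := tofrac ('X : {poly algC}).

(* Noncommutative symmetric functions over K, modelled as the (completed)
   free associative algebra on letters S_1, S_2, ...: an element is a
   coefficient function on words (seq nat); the word [:: i1; ...; ir] stands
   for S^I = S_i1 ... S_ir.
   Every polynomial element lives in the span of words with positive letters;
   Sym(A) embeds injectively, so identities in it are identities here. *)
Definition Sym (K : fieldType) := seq nat -> K.

Section SymOps.
Variable K : fieldType.
Definition szero : Sym K := fun _ => 0.
Definition sone : Sym K := fun w => (w == [::])%:R.
Definition sadd (f g : Sym K) : Sym K := fun w => f w + g w.
Definition sscale (c : K) (f : Sym K) : Sym K := fun w => c * f w.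
Definition smul (f g : Sym K) : Sym K :=
  fun w => \sum_(i < (size w).+1) f (take i w) * g (drop i w).
Definition ssum (T : Type) (s : seq T) (F : T -> Sym K) : Sym K :=
  fun w => \sum_(x <- s) F x w.

Definition Sgen (k : nat) : Sym K :=
  if k == 0%N then sone else fun w => (w == [:: k])%:R.

(* S_l(mA) = coefficient of t^l in (sum_k S_k t^k)^m, computed via
   P^(m+1) = P^m * P *)
Fixpoint Sm (m l : nat) : Sym K :=
  match m with
  | 0%N => if l == 0%N then sone else szero
  | m'.+1 => ssum (iota 0 l.+1) (fun j => smul (Sm m' j) (Sgen (l - j)))
  end.

Fixpoint LS_aux (acc : nat) (s : seq nat) : Sym K :=
  match s with
  | [::] => sone
  | i :: s' => smul (Sm acc.+1 i) (LS_aux (acc + i) s')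
  end.
Definition LS (s : seq nat) : Sym K := LS_aux 0 s.
End SymOps.

Fixpoint words (r n : nat) : seq (seq nat) :=
  match r with
  | 0%N => [:: [::]]
  | r'.+1 => [seq i :: w | i <- iota 1 n, w <- words r' n]
  end.

Definition compositions (n : nat) : seq (seq nat) :=
  [seq s <- flatten [seq words r n | r <- iota 0 n.+1] | sumn s == n].

Definition maj (s : seq nat) : nat :=
  \sum_(j < (size s).-1) sumn (take j.+1 s).

Definition qden (q : Kq) (s : seq nat) : Kq :=
  \prod_(k < size s) (1 - q ^+ sumn (take k.+1 s)).

(* Main.v *)
Require Import Defs.
From HB Require Import structures.
From mathcomp Require Import all_boot all_order all_algebra all_field.
From Stdlib Require Import FunctionalExtensionality.
From mathcomp Require Import zify ring.
Import GRing.Theory.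
Local Open Scope ring_scope.

Section Gen.
Variable K : fieldType.

Lemma tri_exchange (N : nat) (A : nat -> nat -> K) :
  \sum_(0 <= i < N) \sum_(0 <= j < i.+1) A i j =
  \sum_(0 <= j < N) \sum_(j <= i < N) A i j.
Proof.
elim: N => [|N IH]; first by rewrite !big_geq.
rewrite big_nat_recr //= IH [RHS]big_nat_recr //= big_nat1.
rewrite [\sum_(0 <= j < N.+1) A N j]big_nat_recr //= addrA; congr (_ + _).
rewrite -big_split /=; apply: eq_big_nat => j /andP [_ hj].
by rewrite big_nat_recr //= ltnW.
Qed.

Lemma smulE (f g : Sym K) w :
  smul f g w = \sum_(0 <= i < (size w).+1) f (take i w) * g (drop i w).
Proof. by rewrite /smul big_mkord. Qed.

Lemma smul_assoc (f g h : Sym K) : smul (smul f g) h = smul f (smul g h).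
Proof.
apply: functional_extensionality => w; rewrite !smulE.
set n := size w.
transitivity (\sum_(0 <= i < n.+1) \sum_(0 <= j < i.+1)
   f (take j w) * g (take (i - j) (drop j w)) * h (drop i w)).
  apply: eq_big_nat => i /andP [_ hi].
  rewrite smulE size_takel // big_distrl /=.
  apply: eq_big_nat => j /andP [_ hj].
  by rewrite take_takel // take_drop subnK.
rewrite tri_exchange; apply: eq_big_nat => j /andP [_ hj].
rewrite smulE size_drop big_distrr /=.
rewrite -subSn // -{1}(add0n j) big_addn; apply: eq_big_nat => i /andP [_ hi].
by rewrite addnK drop_drop mulrA.
Qed.

Lemma smul1r (f : Sym K) : smul (sone K) f = f.
Proof.
apply: functional_extensionality => w; rewrite /smul big_ord_recl /= /sone.
rewrite take0 drop0 eqxx mul1r big1 ?addr0 // => i _.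
case: w i => [|a w] i /=; first by case: i.
by rewrite mul0r.
Qed.

Lemma smulr1 (f : Sym K) : smul f (sone K) = f.
Proof.
apply: functional_extensionality => w; rewrite /smul big_ord_recr /= /sone.
rewrite take_size drop_size eqxx mulr1 big1 ?add0r // => i _.
have hi : (i < size w)%N by [].
have : size (drop i w) != 0%N by rewrite size_drop subn_eq0 -ltnNge.
by case: (drop i w) => //= _; rewrite mulr0.
Qed.

Lemma smul_ssum (T : Type) (s : seq T) (F : T -> Sym K) (h : Sym K) :
  smul (ssum s F) h = ssum s (fun x => smul (F x) h).
Proof.
apply: functional_extensionality => w; rewrite /smul /ssum.
rewrite exchange_big /=; apply: eq_bigr => i _; exact: big_distrl.
Qed.

Lemma smul_sscale c (f h : Sym K) : smul (sscale c f) h = sscale c (smul f h).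
Proof.
apply: functional_extensionality => w; rewrite /smul /sscale big_distrr /=.
by apply: eq_bigr => i _; rewrite mulrA.
Qed.

Lemma LS_aux_rcons acc I l :
  LS_aux K acc (rcons I l) = smul (LS_aux K acc I) (Sm K (acc + sumn I).+1 l).
Proof.
elim: I acc => [|i I IH] acc /=.
  by rewrite addn0 smulr1 smul1r.
by rewrite IH smul_assoc addnA.
Qed.

End Gen.

Lemma mem_words r n w :
  (w \in words r n) = (size w == r) && all (fun i => (0 < i <= n)%N) w.
Proof.
elim: r w => [|r IH] w /=.
  by rewrite inE; case: w.
apply/allpairsP/idP.
  move=> [[a w'] /= [Ha Hw ->]]; move: Ha; rewrite mem_iota add1n => Ha.
  by move: Hw; rewrite IH /= eqSS => /andP [-> ->]; rewrite Ha.
case: w => [|a w'] //= /andP [Hs /andP [Ha Hw]].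
exists (a, w'); split => //=; first by rewrite mem_iota add1n.
by rewrite IH -(eqSS (size w')) Hs.
Qed.

Lemma uniq_words r n : uniq (words r n).
Proof.
elim: r => [|r IH] //=.
apply: allpairs_uniq => //; first exact: iota_uniq.
by move=> [a b] [c d] _ _ /= [-> ->].
Qed.

Lemma sumn_pos_size s : all (fun i => (0 < i)%N) s -> (size s <= sumn s)%N.
Proof. by elim: s => //= a s IH /andP [Ha /IH Hs]; rewrite -add1n leq_add. Qed.

Lemma mem_le_sumn s i : i \in s -> (i <= sumn s)%N.
Proof.
elim: s => //= a s IH; rewrite inE => /orP [/eqP ->|/IH H]; first exact: leq_addr.
exact: leq_trans H (leq_addl _ _).
Qed.

Lemma uniq_flatten_disj (S T : eqType) (s : seq S) (t : S -> seq T) :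
  uniq s -> (forall x, x \in s -> uniq (t x)) ->
  (forall x y z, x \in s -> y \in s -> z \in t x -> z \in t y -> x = y) ->
  uniq (flatten [seq t x | x <- s]).
Proof.
elim: s => //= x s IH /andP [Hx Hs] Hu Hd.
rewrite cat_uniq Hu ?mem_head //= IH //; last first.
  by move=> a b z Ha Hb; apply: Hd; rewrite inE ?Ha ?Hb orbT.
  by move=> y Hy; apply: Hu; rewrite inE Hy orbT.
rewrite andbT; apply/hasPn => z /flatten_mapP [y Hy Hz]; apply/negP => Hzx.
have E : x = y by apply: Hd Hzx Hz; rewrite inE ?eqxx ?Hy ?orbT.
by move: Hx; rewrite E Hy.
Qed.

Lemma mem_comp n s :
  (s \in compositions n) = (sumn s == n) && all (fun i => (0 < i)%N) s.
Proof.
rewrite mem_filter; apply/andP/andP => [[/eqP Hs /flatten_mapP [r _]]|[/eqP Hs Hp]].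
  rewrite mem_words => /andP [_ Ha]; split; first by rewrite Hs.
  by apply: sub_all Ha => i /andP [].
split; first by rewrite Hs.
apply/flatten_mapP; exists (size s).
  by rewrite mem_iota /= add0n ltnS -Hs sumn_pos_size.
rewrite mem_words eqxx /=; apply/allP => i Hi.
by rewrite (allP Hp) //= -Hs mem_le_sumn.
Qed.

Lemma uniq_comp n : uniq (compositions n).
Proof.
apply: filter_uniq; apply: uniq_flatten_disj.
- exact: iota_uniq.
- by move=> r _; apply: uniq_words.
- by move=> x y z _ _; rewrite !mem_words => /andP [/eqP <- _] /andP [/eqP <-].
Qed.

Definition rlist (n : nat) : seq (seq nat) := flatten [seq [seq rcons J (n - k)%N | J <- compositions k]
                              | k <- iota 0 n].

Lemma perm_comp n : (0 < n)%N -> perm_eq (compositions n) (rlist n).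
Proof.
move=> Hn; apply: uniq_perm; first exact: uniq_comp.
  apply: uniq_flatten_disj; first exact: iota_uniq.
    move=> k _; rewrite map_inj_uniq ?uniq_comp //.
    by move=> a b /rcons_inj [].
  move=> x y z; rewrite !mem_iota /= !add0n => Hx Hy.
  move=> /mapP [I _ ->] /mapP [I' _] /rcons_inj [_] /eqP.
  rewrite -(eqn_add2r x) subnK ?(ltnW Hx) // => /eqP E.
  move: Hx Hy E; clear; move=> Hx Hy E; lia.
move=> J; rewrite mem_comp; apply/andP/flatten_mapP.
  case/lastP: J => [|I l]; first by move=> [/eqP H]; move: Hn; rewrite -H.
  rewrite sumn_rcons all_rcons => [[/eqP Hs /andP [Hl HI]]].
  exists (sumn I); first by rewrite mem_iota add0n /= -Hs -{1}(addn0 (sumn I)) ltn_add2l.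
  apply/mapP; exists I; first by rewrite mem_comp eqxx.
  by rewrite -Hs addKn.
move=> [k]; rewrite mem_iota add0n /= => Hk /mapP [I]; rewrite mem_comp.
move=> /andP [/eqP HI Hp] ->; rewrite sumn_rcons all_rcons HI subnKC ?(ltnW Hk) //.
by rewrite eqxx Hp subn_gt0 Hk.
Qed.

Lemma maj_rcons I l : maj (rcons I l) = (maj I + sumn I)%N.
Proof.
rewrite /maj size_rcons /=.
case: I => [|a I]; first by rewrite !big_ord0.
rewrite (eq_bigr (fun j : 'I_(size (a :: I)) => sumn (take j.+1 (a :: I)))).
  by rewrite big_ord_recr /= take_oversize.
by move=> j _; rewrite -cats1 takel_cat.
Qed.

Lemma qden_rcons q I l : qden q (rcons I l) = qden q I * (1 - q ^+ (sumn I + l)).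
Proof.
rewrite /qden size_rcons big_ord_recr /= take_oversize ?size_rcons // sumn_rcons.
congr (_ * _); apply: eq_bigr => j _.
by rewrite -cats1 takel_cat.
Qed.

Lemma hq n : (0 < n)%N -> 1 - qq ^+ n != 0.
Proof.
move=> Hn; rewrite /qq -tofrac1 -tofracXn -tofracB tofrac_eq0 subr_eq0.
apply/negP => /eqP H; have := congr1 (fun p : {poly algC} => size p) H.
by rewrite size_polyXn size_poly1 => [[E]]; move: Hn; rewrite -E.
Qed.

Definition cf (I : seq nat) : Kq := qq ^+ maj I / qden qq I.
Definition gg n := ssum (compositions n) (fun I => sscale (cf I) (LS Kq I)).

Lemma gg0 : gg 0 = sone Kq.
Proof.
apply: functional_extensionality => w.
by rewrite /gg /ssum /= big_cons big_nil /sscale /cf /maj /qden !big_ord0 expr0 divr1 mul1r addr0.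
Qed.

Lemma ggrec n : (0 < n)%N ->
  sscale (1 - qq ^+ n) (gg n) =
  ssum (iota 0 n) (fun k => sscale (qq ^+ k) (smul (gg k) (Sm Kq k.+1 (n - k)))).
Proof.
move=> Hn; apply: functional_extensionality => w.
rewrite /sscale /gg /ssum /= (perm_big _ (perm_comp n Hn)) /rlist big_flatten big_map.
rewrite big_distrr /=; apply: eq_big_seq => k; rewrite mem_iota add0n /= => Hk.
rewrite smul_ssum /ssum big_map big_distrr big_distrr /=.
apply: eq_big_seq => I; rewrite mem_comp => /andP [/eqP HI _].
rewrite smul_sscale /sscale /LS LS_aux_rcons add0n HI.
rewrite /cf maj_rcons qden_rcons HI subnKC ?(ltnW Hk) // exprD invfM.
move: (hq n Hn); set a := 1 - qq ^+ n => Ha.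
transitivity ((a * a^-1) * (qq ^+ k * (qq ^+ maj I / qden qq I * smul (LS_aux Kq 0 I) (Sm Kq k.+1 (n - k)) w))).
  by rewrite /GRing.exp /=; ring.
by rewrite mulfV // mul1r.
Qed.

Lemma sscale_inj (c : Kq) (a b : Sym Kq) : c != 0 -> sscale c a = sscale c b -> a = b.
Proof.
move=> Hc E; apply: functional_extensionality => w.
by move: (congr1 (fun F => F w) E); rewrite /sscale => /(mulfI Hc).
Qed.

Lemma ssum_eq_in (T : eqType) (s : seq T) (F G : T -> Sym Kq) :
  (forall x, x \in s -> F x = G x) -> ssum s F = ssum s G.
Proof.
move=> H; apply: functional_extensionality => w; rewrite /ssum.
by apply: eq_big_seq => x /H ->.
Qed.

Theorem mainTheorem6 (f : nat -> Sym Kq) :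
  f 0%N = sone Kq ->
  (forall n : nat, (0 < n)%N ->
     sscale (1 - qq ^+ n) (f n) =
     ssum (iota 0 n)
          (fun k => sscale (qq ^+ k) (smul (f k) (Sm Kq k.+1 (n - k))))) ->
  forall n : nat, (0 < n)%N ->
    f n = ssum (compositions n)
               (fun I => sscale (qq ^+ maj I / qden qq I) (LS Kq I)).
Proof.
move=> f0 Hrec.
have hg : forall n, f n = gg n.
  elim/ltn_ind => n IH; case: n IH => [|n] IH; first by rewrite f0 gg0.
  apply: (@sscale_inj _ (f n.+1) (gg n.+1) (hq n.+1 (ltn0Sn n))).
  rewrite Hrec // ggrec //; apply: ssum_eq_in => k.
  by rewrite mem_iota add0n /= => Hk; rewrite IH.
by move=> n _; exact: hg n.
Qed.
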